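(* Let $\alpha,\beta^1,\dots,\beta^m,\gamma^1,\dots,\gamma^r\in\mathrm{ord}$ with $m,r\ge1$. 1. If $\alpha\le\beta^1,\dots,\beta^m$ and $\beta^j\le\gamma^1,\dots,\gamma^r$ for each $j\in\{1,\dots,m\}$, then $\alpha\le\gamma^1,\dots,\gamma^r$. 2. If $\alpha<\beta^1,\dots,\beta^m$ and $\beta^j\le\gamma^1,\dots,\gamma^r$ for each $j$, then $\alpha<\gamma^1,\dots,\gamma^r$. 3. If $\alpha\le\beta^1,\dots,\beta^m$ and $\beta^j<\gamma^1,\dots,\gamma^r$ for each $j$, then $\alpha<\gamma^1,\dots,\gamma^r$.
   Context: Work constructively. Let $\mathfrak F$ be a set of index sets containing $\mathbb N$ and each $\mathbb N_k=\{n\in\mathbb N:n<k\}$ ($k\ge0$), closed (up to isomorphism) under finitely enumerated subsets, sets of finitely enumerated subsets, and disjoint unions indexed by elements of $\mathfrak F$. A finitely enumerated subset of $A$ is one given by a map $\mathbb N_k\to A$; write $F\subseteq_f I$. The set $\mathrm{ord}$ is inductively generated by $\underline 0$ and, for every family $(\alpha_i)_{i\in I}$ with $I\in\mathfrak F$, $\alpha_i\in\mathrm{ord}$, an element $\mathrm S(\alpha_i)_{i\in I}$; for such $\alpha$, $I_\alpha=I$ and $\alpha_i$ are its definitional subordinals; $I_{\underline 0}=\emptyset$. For a finite list $F$ in $I_\alpha$, $\alpha_F$ is the list of the $\alpha_i$, $i\in F$. Relations between an element and a nonempty finite list, by simultaneous induction: $\alpha\le\beta^1,\dots,\beta^m$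 means $\alpha_i<\beta^1,\dots,\beta^m$ for all $i\in I_\alpha$; $\alpha<\beta^1,\dots,\beta^m$ means there exist $F_1\subseteq_f I_{\beta^1},\dots,F_m\subseteq_f I_{\beta^m}$, not all empty, with $\alpha\le\beta^1_{F_1},\dots,\beta^m_{F_m}$ (concatenated list). *)

(* Defs.v *)
From Stdlib Require Import List.
Import ListNotations.
Set Implicit Arguments.

Definition Nk (k : nat) : Type := {n : nat | n < k}.

Record iso (A B : Type) : Type := Iso {
  iso_f : A -> B; iso_g : B -> A;
  iso_fg : forall b, iso_f (iso_g b) = b;
  iso_gf : forall a, iso_g (iso_f a) = a }.

Definition fin_enum (A : Type) : Type := {k : nat & Nk k -> A}.

Definition enum_subset (A : Type) (k : nat) (f : Nk k -> A) : Type :=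
  {x : A | exists i, f i = x}.

(* A set of index sets, given as a family of codes with a decoding. *)
Record Fam : Type := { code : Type; El : code -> Type }.
Arguments El {f} _.

Record fam_closed (F : Fam) : Prop := {
  fc_nat : exists c : code F, inhabited (iso (El c) nat);
  fc_Nk : forall k, exists c : code F, inhabited (iso (El c) (Nk k));
  fc_subset : forall (c : code F) (k : nat) (f : Nk k -> El c),
      exists c' : code F, inhabited (iso (El c') (enum_subset f));
  fc_subsets : forall c : code F,
      exists c' : code F, inhabited (iso (El c') (fin_enum (El c)));
  fc_sigma : forall (c : code F) (d : El c -> code F),
      exists c' : code F, inhabited (iso (El c') {i : El c & El (d i)}) }.

Inductive ord (F : Fam) : Type :=
  | ozero : ord F
  | osucc : forall c : code F, (El c -> ord F) -> ord F.
Arguments ozero {F}.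

Definition Idx (F : Fam) (a : ord F) : Type :=
  match a with ozero => Empty_set | @osucc _ c _ => El c end.

Definition sub (F : Fam) (a : ord F) : Idx a -> ord F :=
  match a as a0 return Idx a0 -> ord F with
  | ozero => fun e => match e with end
  | @osucc _ c f => f
  end.

(* A choice of a finite list F_j in I_{beta^j} for each beta^j: a list of
   pairs (beta^j, F_j). *)
Definition sel (F : Fam) := list {b : ord F & list (Idx b)}.

Definition sel_list (F : Fam) (s : sel F) : list (ord F) :=
  flat_map (fun p => map (@sub F (projT1 p)) (projT2 p)) s.

Inductive ord_le (F : Fam) : ord F -> list (ord F) -> Prop :=
  | ord_le_intro : forall (a : ord F) (bs : list (ord F)),
      (forall i : Idx a, ord_lt (sub a i) bs) -> ord_le a bs
with ord_lt (F : Fam) : ord F -> list (ord F) -> Prop :=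
  | ord_lt_intro : forall (a : ord F) (bs : list (ord F)) (s : sel F),
      map (@projT1 _ _) s = bs ->
      (exists p, In p s /\ projT2 p <> []) ->
      ord_le a (sel_list s) ->
      ord_lt a bs.

(* Main.v *)
Require Import Defs.
From Stdlib Require Import List.
Import ListNotations.

Section S.
Variable F : Fam.
Definition SP := {b : ord F & Idx b}.
Definition subp (p : SP) : ord F := @sub F (projT1 p) (projT2 p).
Definition tol (s : sel F) : list SP :=
  flat_map (fun p => map (fun i => existT (fun b => Idx b) (projT1 p) i) (projT2 p)) s.

Lemma tol_map s : map subp (tol s) = sel_list s.
Proof.
  induction s as [|[b Fs] s IH]; simpl; auto.
  unfold tol, sel_list in *; simpl. rewrite map_app. f_equal; [rewrite map_map; reflexivity | exact IH].
Qed.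

Lemma tol_in s p : In p (tol s) -> In (projT1 p) (map (@projT1 _ _) s).
Proof.
  unfold tol; rewrite in_flat_map. intros [q [Hq Hp]].
  apply in_map_iff in Hp. destruct Hp as [i [<- _]]. simpl.
  apply in_map; auto.
Qed.

Lemma tol_ne s : (exists p, In p s /\ projT2 p <> []) -> tol s <> [].
Proof.
  intros [[b Fs] [Hin Hne]] Hnil. simpl in Hne.
  destruct Fs as [|i Fs]; [congruence|].
  assert (In (existT (fun b => Idx b) b i) (tol s)).
  { unfold tol; apply in_flat_map. exists (existT _ b (i :: Fs)); simpl; auto. }
  rewrite Hnil in H; auto.
Qed.

Lemma insert (s : sel F) (b : ord F) (i : Idx b) :
  In b (map (@projT1 _ _) s) ->
  exists s', map (@projT1 _ _) s' = map (@projT1 _ _) s /\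
    (forall x, In x (sel_list s) -> In x (sel_list s')) /\
    In (@sub F b i) (sel_list s') /\ (exists p, In p s' /\ projT2 p <> []).
Proof.
  induction s as [|[b' Fs] s IH]; simpl; [tauto|].
  intros [E|H].
  - subst b'. exists (existT _ b (i :: Fs) :: s). simpl. split; [auto|].
    split; [intros x Hx; right; exact Hx|].
    split; [auto|]. exists (existT (fun b => list (Idx b)) b (i :: Fs)); simpl; split; auto; congruence.
  - destruct (IH H) as [s' [E1 [E2 [E3 [p [Hp1 Hp2]]]]]].
    exists (existT _ b' Fs :: s'). simpl. rewrite E1. split; [auto|].
    split; [intros x Hx; apply in_app_or in Hx; apply in_or_app; destruct Hx; auto|].
    split; [apply in_or_app; auto|]. exists p; auto.
Qed.

Lemma gather (L' : list (ord F)) (l : list SP) :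
  (forall p, In p l -> In (projT1 p) L') ->
  exists s, map (@projT1 _ _) s = L' /\
    (forall p, In p l -> In (subp p) (sel_list s)) /\
    (l <> [] -> exists p, In p s /\ projT2 p <> []).
Proof.
  induction l as [|[b i] l IH]; intros H.
  - exists (map (fun b => existT (fun b => list (Idx b)) b []) L').
    rewrite map_map. simpl. rewrite map_id. split; auto. split; [simpl; tauto|congruence].
  - destruct IH as [s [E1 [E2 _]]]; [intros; apply H; simpl; auto|].
    destruct (@insert s b i) as [s' [F1 [F2 [F3 F4]]]].
    { rewrite E1. apply (H (existT _ b i)); simpl; auto. }
    exists s'. split; [congruence|]. split; [|auto].
    intros p [<-|Hp]; auto.
Qed.

Lemma le_inv (a : ord F) (L : list (ord F)) : ord_le a L -> forall i, ord_lt (@sub F a i) L.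
Proof. destruct 1; auto. Qed.

Lemma lt_inv (a : ord F) (L : list (ord F)) : ord_lt a L -> exists l : list SP, l <> [] /\
  (forall p, In p l -> In (projT1 p) L) /\ ord_le a (map subp l).
Proof.
  destruct 1 as [a L s E Hne Hle]. exists (tol s).
  split; [apply tol_ne; auto|]. split.
  - intros p Hp; subst; apply tol_in; auto.
  - rewrite tol_map; auto.
Qed.

Lemma mono (a : ord F) : (forall L L', ord_le a L -> incl L L' -> ord_le a L') /\
                (forall L L', ord_lt a L -> incl L L' -> ord_lt a L').
Proof.
  induction a as [|c f IH].
  - assert (HL : forall L L', ord_le (@ozero F) L -> incl L L' -> ord_le (@ozero F) L').
    { intros; constructor; intros []. }
    split; auto.
    intros L L' H Hi. apply lt_inv in H. destruct H as [l [Hne [Hin Hle]]].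
    destruct (gather L' l) as [s [E1 [E2 E3]]]; [intros; apply Hi; auto|].
    econstructor; eauto. constructor; intros [].
  - assert (HL : forall L L', ord_le (osucc c f) L -> incl L L' -> ord_le (osucc c f) L').
    { intros L L' H Hi; constructor; intro i.
      exact (proj2 (IH i) L L' (le_inv _ _ H i) Hi). }
    split; auto.
    intros L L' H Hi. apply lt_inv in H. destruct H as [l [Hne [Hin Hle]]].
    destruct (gather L' l) as [s [E1 [E2 E3]]]; [intros; apply Hi; auto|].
    econstructor; eauto. eapply HL; eauto.
    intros x Hx. apply in_map_iff in Hx. destruct Hx as [p [<- Hp]]. auto.
Qed.

Lemma l_to_lt (a : ord F) (L : list (ord F)) (l : list SP) :
  l <> [] -> (forall p, In p l -> In (projT1 p) L) -> ord_le a (map subp l) -> ord_lt a L.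
Proof.
  intros Hne Hin Hle.
  destruct (gather L l) as [s [E1 [E2 E3]]]; auto.
  econstructor; eauto. eapply (proj1 (mono a)); eauto.
  intros x Hx. apply in_map_iff in Hx. destruct Hx as [p [<- Hp]]. auto.
Qed.

Lemma combine (bs cs : list (ord F)) :
  (forall b, In b bs -> ord_lt b cs) ->
  exists l : list SP, (forall p, In p l -> In (projT1 p) cs) /\ (forall b, In b bs -> ord_le b (map subp l)) /\ (bs <> [] -> l <> []).
Proof.
  induction bs as [|b bs IH]; intros H.
  - exists []. simpl. split; [tauto|]. split; [tauto|congruence].
  - destruct IH as [l' [H1 [H2 _]]]; [intros; apply H; simpl; auto|].
    destruct (lt_inv _ _ (H b (or_introl eq_refl))) as [l [Hne [Hin Hle]]].
    exists (l ++ l'). split.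
    + intros p Hp; apply in_app_or in Hp; destruct Hp; auto.
    + split.
      * intros x [<-|Hx]; eapply (proj1 (mono _)); eauto;
          intros y Hy; rewrite map_app; apply in_or_app; auto.
      * intros _ E. apply app_eq_nil in E. tauto.
Qed.

Definition P (a : ord F) : Prop := forall bs cs : list (ord F),
  (ord_le a bs -> (forall b, In b bs -> ord_le b cs) -> ord_le a cs) /\ (ord_lt a bs -> (forall b, In b bs -> ord_le b cs) -> ord_lt a cs) /\ (bs <> [] -> ord_le a bs -> (forall b, In b bs -> ord_lt b cs) -> ord_lt a cs).

Lemma step (a : ord F) : (forall i : Idx a, P (@sub F a i)) -> P a.
Proof.
  intros IH bs cs.
  assert (HC : forall bs, bs <> [] -> ord_le a bs -> (forall b, In b bs -> ord_lt b cs) -> ord_lt a cs).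
  { clear bs. intros bs Hne Hle Hlt.
    destruct (combine bs cs Hlt) as [l [H1 [H2 H3]]].
    apply (l_to_lt a cs l); auto.
    constructor; intro i. apply (proj1 (proj2 (IH i bs (map subp l)))); auto.
    exact (le_inv _ _ Hle i). }
  split; [|split; [|apply HC]].
  - intros Hle Hb. constructor; intro i.
    apply (proj1 (proj2 (IH i bs cs))); auto. exact (le_inv _ _ Hle i).
  - intros Hlt Hb. destruct (lt_inv _ _ Hlt) as [l [Hne [Hin Hle]]].
    apply (HC (map subp l)); auto.
    + intro E. apply map_eq_nil in E. auto.
    + intros x Hx. apply in_map_iff in Hx. destruct Hx as [p [<- Hp]].
      exact (le_inv _ _ (Hb _ (Hin p Hp)) (projT2 p)).
Qed.

Lemma allP (a : ord F) : P a.
Proof.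
  induction a as [|c f IH]; apply step; [intros []|exact IH].
Qed.
End S.

Theorem lemma4p2 (F : Fam) (HF : fam_closed F) (a : ord F)
    (bs cs : list (ord F)) (Hbs : bs <> []) (Hcs : cs <> []) :
  ((ord_le a bs /\ (forall b, In b bs -> ord_le b cs)) -> ord_le a cs) /\
  ((ord_lt a bs /\ (forall b, In b bs -> ord_le b cs)) -> ord_lt a cs) /\
  ((ord_le a bs /\ (forall b, In b bs -> ord_lt b cs)) -> ord_lt a cs).
Proof.
  destruct (allP F a bs cs) as [H1 [H2 H3]].
  split; [|split]; intros [X Y]; auto.
Qed.
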